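(* Let $\mathrm{param}$ be a type with a function $\mathrm{varsOf}:\mathrm{param}\to\mathrm{varsort}\to\mathrm{var}\;\mathrm{set}$, and let $\phi:\mathrm{term}\to\mathrm{param}\to\mathrm{bool}$ and $\phi_{Abs}:\mathrm{abs}\to\mathrm{param}\to\mathrm{bool}$. Assume: (1) for all $xs,p$: $|\mathrm{varsOf}\;p\;xs|<|\mathrm{var}|$; (2) for all $xs,x,p$: $\phi\;(\mathrm{Var}\;xs\;x)\;p$; (3) for all $\delta,inp,binp,p$: if $|\mathrm{dom}\;inp|<|\mathrm{var}|$, $|\mathrm{dom}\;binp|<|\mathrm{var}|$, every value $X$ of $inp$ is good and satisfies $\forall q.\,\phi\;X\;q$, and every value $A$ of $binp$ is good and satisfies $\forall q.\,\phi_{Abs}\;A\;q$, then $\phi\;(\mathrm{Op}\;\delta\;inp\;binp)\;p$; (4) for all $xs,x,X,p$: if $X$ is good, $\phi\;X\;p$ and $x\notin\mathrm{varsOf}\;p\;xs$, then $\phi_{Abs}\;(\mathrm{Abs}\;xs\;x\;X)\;p$. Then $\phi\;X\;p$ holds for all good terms $X$ and all $p$, and $\phi_{Abs}\;A\;p$ holds for all good abstractions $A$ and all $p$.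
   Context: Fix types $\mathrm{var}$, $\mathrm{varsort}$, $\mathrm{index}$, $\mathrm{bindex}$, $\mathrm{opsym}$, with $|\mathrm{var}|$ an infinite regular cardinal. $(\alpha,\beta)\,\mathrm{input}$ = partial functions $\alpha\to\beta\;\mathrm{option}$; $\mathrm{dom}\,f=\{i\mid f\,i\ne\mathrm{None}\}$. Terms ($\mathrm{term}$) and abstractions ($\mathrm{abs}$) are alpha-equivalence classes of the free mutually recursive datatypes $\mathrm{qterm}=\mathrm{qVar}\;\mathrm{varsort}\;\mathrm{var}\mid\mathrm{qOp}\;\mathrm{opsym}\;((\mathrm{index},\mathrm{qterm})\mathrm{input})\;((\mathrm{bindex},\mathrm{qabs})\mathrm{input})$, $\mathrm{qabs}=\mathrm{qAbs}\;\mathrm{varsort}\;\mathrm{var}\;\mathrm{qterm}$ (in $\mathrm{qAbs}\;xs\;x\;X$, $x$ of varsort $xs$ is bound in $X$), with lifted constructors $\mathrm{Var}$, $\mathrm{Op}$, $\mathrm{Abs}$. A term/abstraction is good if every $\mathrm{Op}$ node in it has free and bound inputs with domains of cardinality $<|\mathrm{var}|$. *)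

(* Defs.v *)
From Stdlib Require Import ClassicalEpsilon Relation_Operators.

Set Implicit Arguments.

Definition injective {A B : Type} (f : A -> B) := forall x y, f x = f y -> x = y.

Definition cardLt {A : Type} (P : A -> Prop) (B : Type) : Prop :=
  (exists f : sig P -> B, injective f) /\ ~ (exists g : B -> sig P, injective g).

Definition infiniteT (V : Type) : Prop := exists f : nat -> V, injective f.

Definition regularT (V : Type) : Prop :=
  forall (I : Type) (F : I -> V -> Prop),
    cardLt (fun _ : I => True) V ->
    (forall i, cardLt (F i) V) ->
    cardLt (fun v => exists i, F i v) V.

Definition input (A B : Type) := A -> option B.
Definition dom {A B : Type} (f : input A B) : A -> Prop := fun i => f i <> None.

Section Terms.
Variables var varsort index bindex opsym : Type.

Inductive qterm : Type :=
| qVar : varsort -> var -> qterm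
| qOp : opsym -> (index -> option qterm) -> (bindex -> option qabs) -> qterm
with qabs : Type :=
| qAbs : varsort -> var -> qterm -> qabs.

Definition eq_decide {A : Type} (a b : A) : bool :=
  if excluded_middle_informative (a = b) then true else false.

Definition sw (xs : varsort) (x y : var) (zs : varsort) (z : var) : var :=
  if eq_decide zs xs then
    (if eq_decide z x then y else if eq_decide z y then x else z)
  else z.

Fixpoint qSwap (xs : varsort) (x y : var) (X : qterm) {struct X} : qterm :=
  match X with
  | qVar zs z => qVar zs (sw xs x y zs z)
  | qOp d inp binp =>
      qOp d (fun i => match inp i with Some Y => Some (qSwap xs x y Y) | None => None end)
            (fun i => match binp i with Some A => Some (qSwapAbs xs x y A) | None => None end)
  end
with qSwapAbs (xs : varsort) (x y : var) (A : qabs) {struct A} : qabs :=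
  match A with
  | qAbs zs z Y => qAbs zs (sw xs x y zs z) (qSwap xs x y Y)
  end.

Fixpoint qFresh (xs : varsort) (x : var) (X : qterm) {struct X} : Prop :=
  match X with
  | qVar zs z => ~ (zs = xs /\ z = x)
  | qOp _ inp binp =>
      (forall i, match inp i with Some Y => qFresh xs x Y | None => True end) /\
      (forall i, match binp i with Some A => qFreshAbs xs x A | None => True end)
  end
with qFreshAbs (xs : varsort) (x : var) (A : qabs) {struct A} : Prop :=
  match A with
  | qAbs zs z Y => (zs = xs /\ z = x) \/ qFresh xs x Y
  end.

Fixpoint qGood (X : qterm) : Prop :=
  match X with
  | qVar _ _ => True
  | qOp _ inp binp =>
      cardLt (dom inp) var /\ cardLt (dom binp) var /\
      (forall i, match inp i with Some Y => qGood Y | None => True end) /\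
      (forall i, match binp i with Some A => qGoodAbs A | None => True end)
  end
with qGoodAbs (A : qabs) : Prop :=
  match A with
  | qAbs _ _ Y => qGood Y
  end.

Inductive alpha : qterm -> qterm -> Prop :=
| alpha_Var : forall xs x, alpha (qVar xs x) (qVar xs x)
| alpha_Op : forall d inp inp' binp binp',
    (forall i, inp i = None <-> inp' i = None) ->
    (forall i X X', inp i = Some X -> inp' i = Some X' -> alpha X X') ->
    (forall i, binp i = None <-> binp' i = None) ->
    (forall i A A', binp i = Some A -> binp' i = Some A' -> alphaAbs A A') ->
    alpha (qOp d inp binp) (qOp d inp' binp')
with alphaAbs : qabs -> qabs -> Prop :=
| alpha_Abs : forall xs x x' X X' y,
    y <> x -> y <> x' -> qFresh xs y X -> qFresh xs y X' ->
    alpha (qSwap xs y x X) (qSwap xs y x' X') ->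
    alphaAbs (qAbs xs x X) (qAbs xs x' X').

(* the equivalence generated by alpha (alpha itself is an equivalence on
   good quasi-terms, which is all the theorem is about) *)
Definition alphaE : qterm -> qterm -> Prop := clos_refl_sym_trans qterm alpha.
Definition alphaAbsE : qabs -> qabs -> Prop := clos_refl_sym_trans qabs alphaAbs.

Definition term : Type := { C : qterm -> Prop | exists X, C = alphaE X }.
Definition abs : Type := { C : qabs -> Prop | exists A, C = alphaAbsE A }.

Definition clsT (X : qterm) : term := exist _ (alphaE X) (ex_intro _ X eq_refl).
Definition clsA (A : qabs) : abs := exist _ (alphaAbsE A) (ex_intro _ A eq_refl).

Definition repT (T : term) : qterm :=
  proj1_sig (constructive_indefinite_description _ (proj2_sig T)).
Definition repA (T : abs) : qabs :=
  proj1_sig (constructive_indefinite_description _ (proj2_sig T)).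

Definition Var (xs : varsort) (x : var) : term := clsT (qVar xs x).
Definition Op (d : opsym) (inp : input index term) (binp : input bindex abs) : term :=
  clsT (qOp d (fun i => match inp i with Some T => Some (repT T) | None => None end)
              (fun i => match binp i with Some A => Some (repA A) | None => None end)).
Definition Abs (xs : varsort) (x : var) (T : term) : abs := clsA (qAbs xs x (repT T)).

Definition good (T : term) : Prop := qGood (repT T).
Definition goodAbs (A : abs) : Prop := qGoodAbs (repA A).

End Terms.

Arguments Var {var varsort index bindex opsym}.
Arguments Op {var varsort index bindex opsym}.
Arguments Abs {var varsort index bindex opsym}.
Arguments good {var varsort index bindex opsym}.
Arguments goodAbs {var varsort index bindex opsym}.

(* Main.v *)
Require Import Defs.
From Stdlib Require Import ClassicalEpsilon Relation_Operators FunctionalExtensionality ProofIrrelevance PropExtensionality Classical.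


Lemma cardLt_sub {A V : Type} (P Q : A -> Prop) :
  (forall a, P a -> Q a) -> cardLt Q V -> cardLt P V.
Proof.
  intros HPQ [[f Hf] Hn]. split.
  - exists (fun p => f (exist _ (proj1_sig p) (HPQ _ (proj2_sig p)))).
    intros [a pa] [b pb] E. apply Hf in E. inversion E; subst.
    f_equal; apply proof_irrelevance.
  - intros [g Hg]. apply Hn.
    exists (fun v => exist _ (proj1_sig (g v)) (HPQ _ (proj2_sig (g v)))).
    intros x y E. apply Hg. inversion E as [E'].
    destruct (g x), (g y); simpl in *; subst; f_equal; apply proof_irrelevance.
Qed.

Lemma cardLt_nonfull {A : Type} (P : A -> Prop) : cardLt P A -> exists a, ~ P a.
Proof.
  intros [_ Hn]. apply NNPP; intro H. apply Hn.
  assert (HP : forall a, P a) by (intro a; apply NNPP; intro; apply H; eauto).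
  exists (fun a => exist _ a (HP a)). intros x y E. inversion E; auto.
Qed.

Lemma cardLt_empty {V : Type} (Hinf : infiniteT V) (A : Type) :
  cardLt (fun _ : A => False) V.
Proof.
  split.
  - exists (fun p : sig (fun _ : A => False) => False_rect V (proj2_sig p)). intros [? []].
  - intros [g _]. destruct Hinf as [f _]. destruct (g (f 0)); contradiction.
Qed.

Lemma cardLt_single {V : Type} (Hinf : infiniteT V) (a : V) :
  cardLt (fun v => v = a) V.
Proof.
  split.
  - exists (@proj1_sig _ _). intros [x px] [y py]; simpl; intros; subst.
    f_equal; apply proof_irrelevance.
  - intros [g Hg]. destruct Hinf as [f Hf].
    assert (g (f 0) = g (f 1)).
    { destruct (g (f 0)) as [x px], (g (f 1)) as [y py]. subst. f_equal; apply proof_irrelevance. }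
    apply Hg, Hf in H. discriminate.
Qed.

Lemma cardLt_bool {V : Type} (Hinf : infiniteT V) : cardLt (fun _ : bool => True) V.
Proof.
  destruct Hinf as [f Hf]. split.
  - exists (fun b : sig (fun _ : bool => True) => if proj1_sig b then f 0 else f 1).
    intros [[|] []] [[|] []]; simpl; intro E; auto; apply Hf in E; discriminate.
  - intros [g Hg].
    assert (Hk : forall n m, proj1_sig (g (f n)) = proj1_sig (g (f m)) -> n = m).
    { intros n m E. apply Hf, Hg. destruct (g (f n)), (g (f m)); simpl in *; subst.
      destruct t, t0; reflexivity. }
    destruct (proj1_sig (g (f 0))) eqn:E0, (proj1_sig (g (f 1))) eqn:E1,
      (proj1_sig (g (f 2))) eqn:E2;
    first [ assert (0 = 1) by (apply Hk; congruence)
          | assert (0 = 2) by (apply Hk; congruence)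
          | assert (1 = 2) by (apply Hk; congruence) ]; discriminate.
Qed.

Lemma cardLt_union2 {A : Type} (Hinf : infiniteT A) (Hreg : regularT A) (P Q : A -> Prop) :
  cardLt P A -> cardLt Q A -> cardLt (fun v => P v \/ Q v) A.
Proof.
  intros HP HQ.
  apply (cardLt_sub _ (fun v => exists b : bool, (if b then P else Q) v)).
  - intros a [H|H]; [exists true | exists false]; auto.
  - apply Hreg. apply cardLt_bool; auto. intros []; auto.
Qed.

Lemma cardLt_index {V I : Type} (D : I -> Prop) : cardLt D V -> cardLt (fun _ : sig D => True) V.
Proof.
  intros [[f Hf] Hn]; split.
  - exists (fun p => f (proj1_sig p)). intros [x []] [y []]; simpl; intro E; apply Hf in E; subst; auto.
  - intros [g Hg]; apply Hn. exists (fun v => proj1_sig (g v)).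
    intros x y E. apply Hg. destruct (g x) as [a []], (g y) as [b []]; simpl in *; subst; auto.
Qed.

Lemma cardLt_bigunion {V I B : Type} (Hinf : infiniteT V) (Hreg : regularT V)
  (inp : I -> option B) (F : B -> V -> Prop) :
  cardLt (dom inp) V -> (forall i b, inp i = Some b -> cardLt (F b) V) ->
  cardLt (fun v => exists i, match inp i with Some b => F b v | None => False end) V.
Proof.
  intros Hd HF.
  apply (cardLt_sub _ (fun v => exists j : sig (dom inp),
     match inp (proj1_sig j) with Some b => F b v | None => False end)).
  - intros v [i Hi]. destruct (inp i) eqn:E; [|contradiction].
    assert (Hdi : dom inp i) by (unfold dom; congruence).
    exists (exist _ i Hdi); simpl; rewrite E; auto.
  - apply Hreg. apply cardLt_index; auto.
    intros [i Hi]; simpl. destruct (inp i) eqn:E; eauto. apply cardLt_empty; auto.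
Qed.

Section Dev.
Variables var varsort index bindex opsym : Type.
Notation qT := (qterm var varsort index bindex opsym).
Notation qA := (qabs var varsort index bindex opsym).
Hypothesis Hinf : infiniteT var.
Hypothesis Hreg : regularT var.

Fixpoint qind (P : qT -> Prop) (Q : qA -> Prop)
  (HV : forall s x, P (qVar index bindex opsym s x))
  (HO : forall d inp binp, (forall i Y, inp i = Some Y -> P Y) ->
        (forall i A, binp i = Some A -> Q A) -> P (qOp d inp binp))
  (HA : forall s x Y, P Y -> Q (qAbs s x Y)) (X : qT) {struct X} : P X :=
  match X with
  | qVar _ _ _ s x => HV s x
  | qOp d inp binp => HO d inp binp
      (fun i => match inp i as o return (forall Y, o = Some Y -> P Y) with
                | Some Y0 => fun Y e => match e in _ = o' return (match o' with Some Y' => P Y' | None => True end) with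
                                        | eq_refl => qind P Q HV HO HA Y0 end
                | None => fun Y e => False_ind _ match e in _ = o' return (match o' with Some _ => False | None => True end) with eq_refl => I end
                end)
      (fun i => match binp i as o return (forall A, o = Some A -> Q A) with
                | Some A0 => fun A e => match e in _ = o' return (match o' with Some A' => Q A' | None => True end) with
                                        | eq_refl => qindA P Q HV HO HA A0 end
                | None => fun A e => False_ind _ match e in _ = o' return (match o' with Some _ => False | None => True end) with eq_refl => I end
                end)
  end
with qindA (P : qT -> Prop) (Q : qA -> Prop)
  (HV : forall s x, P (qVar index bindex opsym s x))
  (HO : forall d inp binp, (forall i Y, inp i = Some Y -> P Y) ->
        (forall i A, binp i = Some A -> Q A) -> P (qOp d inp binp))
  (HA : forall s x Y, P Y -> Q (qAbs s x Y)) (A : qA) {struct A} : Q A :=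
  match A with
  | qAbs s x Y => HA s x Y (qind P Q HV HO HA Y)
  end.


Lemma qboth (P : qT -> Prop) (Q : qA -> Prop)
  (HV : forall s x, P (qVar index bindex opsym s x))
  (HO : forall d inp binp, (forall i Y, inp i = Some Y -> P Y) ->
        (forall i A, binp i = Some A -> Q A) -> P (qOp d inp binp))
  (HA : forall s x Y, P Y -> Q (qAbs s x Y)) :
  (forall X, P X) /\ (forall A, Q A).
Proof. exact (conj (qind P Q HV HO HA) (qindA P Q HV HO HA)). Qed.

Fixpoint qMap (f : varsort -> var -> var) (X : qT) {struct X} : qT :=
  match X with
  | qVar _ _ _ s x => qVar index bindex opsym s (f s x)
  | qOp d inp binp => qOp d (fun i => match inp i with Some Y => Some (qMap f Y) | None => None end)
                            (fun i => match binp i with Some A => Some (qMapAbs f A) | None => None end)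
  end
with qMapAbs (f : varsort -> var -> var) (A : qA) {struct A} : qA :=
  match A with qAbs s x Y => qAbs s (f s x) (qMap f Y) end.

Fixpoint qOcc (s : varsort) (v : var) (X : qT) {struct X} : Prop :=
  match X with
  | qVar _ _ _ zs z => zs = s /\ z = v
  | qOp _ inp binp =>
      (exists i, match inp i with Some Y => qOcc s v Y | None => False end) \/
      (exists i, match binp i with Some A => qOccAbs s v A | None => False end)
  end
with qOccAbs (s : varsort) (v : var) (A : qA) {struct A} : Prop :=
  match A with qAbs zs z Y => (zs = s /\ z = v) \/ qOcc s v Y end.

Lemma qSwap_map_both xs a b :
  (forall X : qT, qSwap xs a b X = qMap (sw xs a b) X) /\
  (forall A : qA, qSwapAbs xs a b A = qMapAbs (sw xs a b) A).
Proof.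
  apply qboth; simpl; intros.
  - reflexivity.
  - f_equal; apply functional_extensionality; intro i.
    + destruct (inp i) eqn:E; [f_equal; eauto | reflexivity].
    + destruct (binp i) eqn:E; [f_equal; eauto | reflexivity].
  - congruence.
Qed.

Lemma qMap_comp_both f g :
  (forall X : qT, qMap f (qMap g X) = qMap (fun s v => f s (g s v)) X) /\
  (forall A : qA, qMapAbs f (qMapAbs g A) = qMapAbs (fun s v => f s (g s v)) A).
Proof.
  apply qboth; simpl; intros.
  - reflexivity.
  - f_equal; apply functional_extensionality; intro i.
    + destruct (inp i) eqn:E; [f_equal; eauto | reflexivity].
    + destruct (binp i) eqn:E; [f_equal; eauto | reflexivity].
  - congruence.
Qed.

Lemma qMap_ext_both :
  (forall X : qT, forall f g, (forall s v, qOcc s v X -> f s v = g s v) -> qMap f X = qMap g X) /\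
  (forall A : qA, forall f g, (forall s v, qOccAbs s v A -> f s v = g s v) -> qMapAbs f A = qMapAbs g A).
Proof.
  apply qboth; simpl; intros.
  - rewrite H; auto.
  - f_equal; apply functional_extensionality; intro i.
    + destruct (inp i) eqn:E; [f_equal; eapply H; eauto | reflexivity].
      intros; apply H1; left; exists i; rewrite E; auto.
    + destruct (binp i) eqn:E; [f_equal; eapply H0; eauto | reflexivity].
      intros; apply H1; right; exists i; rewrite E; auto.
  - rewrite (H0 s x); auto. f_equal; apply H; auto.
Qed.

Lemma qMap_id_both :
  (forall X : qT, qMap (fun _ v => v) X = X) /\
  (forall A : qA, qMapAbs (fun _ v => v) A = A).
Proof.
  apply qboth; simpl; intros.
  - reflexivity.
  - f_equal; apply functional_extensionality; intro i.
    + destruct (inp i) eqn:E; [f_equal; eauto | reflexivity].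
    + destruct (binp i) eqn:E; [f_equal; eauto | reflexivity].
  - congruence.
Qed.

Lemma qOcc_map_both f :
  (forall X : qT, forall s v, qOcc s v (qMap f X) -> exists u, qOcc s u X /\ f s u = v) /\
  (forall A : qA, forall s v, qOccAbs s v (qMapAbs f A) -> exists u, qOccAbs s u A /\ f s u = v).
Proof.
  apply qboth; simpl; intros.
  - destruct H; subst; eauto.
  - destruct H1 as [[i Hi]|[i Hi]].
    + destruct (inp i) eqn:E; [|contradiction].
      destruct (H i q E s v Hi) as [u [? ?]]. exists u; split; auto. left; exists i; rewrite E; auto.
    + destruct (binp i) eqn:E; [|contradiction].
      destruct (H0 i q E s v Hi) as [u [? ?]]. exists u; split; auto. right; exists i; rewrite E; auto.
  - destruct H0 as [[? ?]|?]; subst.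
    + exists x; split; auto.
    + destruct (H s0 v H0) as [u [? ?]]; eauto.
Qed.

Lemma notocc_fresh_both :
  (forall X : qT, forall s v, ~ qOcc s v X -> qFresh s v X) /\
  (forall A : qA, forall s v, ~ qOccAbs s v A -> qFreshAbs s v A).
Proof.
  apply qboth; simpl; intros.
  - intros [? ?]; apply H; subst; auto.
  - split; intro i.
    + destruct (inp i) eqn:E; auto. apply (H i); auto. intro; apply H1; left; exists i; rewrite E; auto.
    + destruct (binp i) eqn:E; auto. apply (H0 i); auto. intro; apply H1; right; exists i; rewrite E; auto.
  - right; apply H; auto.
Qed.

Definition inj (f : varsort -> var -> var) := forall s a b, f s a = f s b -> a = b.

Lemma fresh_map_both f (Hf : inj f) :
  (forall X : qT, forall s v, qFresh s v X -> qFresh s (f s v) (qMap f X)) /\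
  (forall A : qA, forall s v, qFreshAbs s v A -> qFreshAbs s (f s v) (qMapAbs f A)).
Proof.
  apply qboth; simpl; intros.
  - intros [? ?]; subst. apply H. split; auto. eapply Hf; eauto.
  - destruct H1 as [H1 H2]; split; intro i.
    + specialize (H1 i). destruct (inp i) eqn:E; auto. eapply H; eauto.
    + specialize (H2 i). destruct (binp i) eqn:E; auto. eapply H0; eauto.
  - destruct H0 as [[? ?]|?]; subst; auto.
Qed.

Lemma good_map_both f :
  (forall X : qT, qGood (qMap f X) <-> qGood X) /\
  (forall A : qA, qGoodAbs (qMapAbs f A) <-> qGoodAbs A).
Proof.
  apply qboth; simpl; intros.
  - tauto.
  - split; intros [Hd [Hb [Hi Ha]]]; (split; [|split; [|split]]).
    + revert Hd; apply cardLt_sub; unfold dom; intros i; destruct (inp i); congruence.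
    + revert Hb; apply cardLt_sub; unfold dom; intros i; destruct (binp i); congruence.
    + intro i; specialize (Hi i); destruct (inp i) eqn:E; auto; eapply H; eauto.
    + intro i; specialize (Ha i); destruct (binp i) eqn:E; auto; eapply H0; eauto.
    + revert Hd; apply cardLt_sub; unfold dom; intros i; destruct (inp i); congruence.
    + revert Hb; apply cardLt_sub; unfold dom; intros i; destruct (binp i); congruence.
    + intro i; specialize (Hi i); destruct (inp i) eqn:E; auto; eapply H; eauto.
    + intro i; specialize (Ha i); destruct (binp i) eqn:E; auto; eapply H0; eauto.
  - auto.
Qed.

Lemma occ_small_both :
  (forall X : qT, qGood X -> forall s, cardLt (fun v => qOcc s v X) var) /\
  (forall A : qA, qGoodAbs A -> forall s, cardLt (fun v => qOccAbs s v A) var).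
Proof.
  apply qboth; simpl; intros.
  - apply (cardLt_sub _ (fun v => v = x)). intros v [_ ?]; auto. apply cardLt_single; auto.
  - destruct H1 as [Hd [Hb [Hi Ha]]].
    apply cardLt_union2; auto.
    + apply cardLt_bigunion; auto. intros i b E. specialize (Hi i); rewrite E in Hi. eauto.
    + apply cardLt_bigunion; auto. intros i b E. specialize (Ha i); rewrite E in Ha. eauto.
  - apply cardLt_union2; auto.
    apply (cardLt_sub _ (fun v => v = x)). intros v [_ ?]; auto. apply cardLt_single; auto.
Qed.

Lemma avoid (P : var -> Prop) (X : qT) s :
  cardLt P var -> qGood X -> cardLt (fun v => P v \/ qOcc s v X) var.
Proof. intros; apply cardLt_union2; auto. apply occ_small_both; auto. Qed.

Lemma avoid1 (P : var -> Prop) a :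
  cardLt P var -> cardLt (fun v => P v \/ v = a) var.
Proof. intros; apply cardLt_union2; auto. apply cardLt_single; auto. Qed.

Lemma small0 : cardLt (fun _ : var => False) var.
Proof. apply cardLt_empty; auto. Qed.



Implicit Types (xs zs s : varsort) (a b u v w x y z : var) (f : varsort -> var -> var).

Ltac swtac :=
  unfold sw, eq_decide in *;
  repeat (match goal with
          | |- context [excluded_middle_informative ?P] =>
              lazymatch P with context [excluded_middle_informative _] => fail | _ =>
              destruct (excluded_middle_informative P) end
          end; subst; try congruence); try congruence.

Lemma sw_map_comm f (Hf : inj f) xs y x zs v :
  f zs (sw xs y x zs v) = sw xs (f xs y) (f xs x) zs (f zs v).
Proof.
  unfold sw, eq_decide.
  repeat (match goal with
          | |- context [excluded_middle_informative ?P] =>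
              lazymatch P with context [excluded_middle_informative _] => fail | _ =>
              destruct (excluded_middle_informative P) end
          end; subst; try congruence;
          repeat match goal with H : f ?s ?a = f ?s ?b |- _ => apply Hf in H; subst end;
          try congruence).
Qed.

Lemma sw_id xs a zs v : sw xs a a zs v = v.
Proof. swtac. Qed.

Lemma sw_sym xs a b zs v : sw xs a b zs v = sw xs b a zs v.
Proof. swtac. Qed.

Lemma sw_perm1 s u a b zs v : u <> a -> u <> b -> a <> b ->
  sw s u b zs (sw s a b zs v) = sw s u a zs (sw s u b zs v).
Proof. intros; swtac. Qed.

Lemma sw_perm2 s w y x zs v : x <> w -> x <> y ->
  sw s w y zs (sw s y x zs v) = sw s w x zs (sw s w y zs v).
Proof. intros; swtac. Qed.

Lemma sw_perm3 s z y x zs v : z <> y -> z <> x -> ~ (zs = s /\ v = y) -> ~ (zs = s /\ v = z) ->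
  sw s z y zs (sw s y x zs v) = sw s z x zs v.
Proof. intros; swtac; tauto. Qed.

Lemma sw_inj xs a b : inj (sw xs a b).
Proof. intros zs u v; swtac. Qed.

Lemma sw_inj_comp xs a b f : inj f -> inj (fun s v => sw xs a b s (f s v)).
Proof. intros Hf zs u v E. apply sw_inj in E. eauto. Qed.


Scheme alpha_mut := Induction for alpha Sort Prop
  with alphaAbs_mut := Induction for alphaAbs Sort Prop.
Combined Scheme alpha_comb from alpha_mut, alphaAbs_mut.

Lemma qSwap_map xs a b (X : qT) : qSwap xs a b X = qMap (sw xs a b) X.
Proof. apply qSwap_map_both. Qed.
Lemma qMap_comp f g (X : qT) : qMap f (qMap g X) = qMap (fun s v => f s (g s v)) X.
Proof. apply qMap_comp_both. Qed.

Lemma alpha_map f (Hf : inj f) :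
  (forall X Y : qT, alpha X Y -> alpha (qMap f X) (qMap f Y)) /\
  (forall A B : qA, alphaAbs A B -> alphaAbs (qMapAbs f A) (qMapAbs f B)).
Proof.
  apply alpha_comb; simpl.
  - constructor.
  - intros d inp inp' binp binp' Hn1 Hc1 H Hn2 Hc2 H0.
    apply alpha_Op.
    + intro i; specialize (Hn1 i); destruct (inp i), (inp' i); split; intro; try congruence; exfalso; intuition congruence.
    + intros i X X' E1 E2. destruct (inp i) eqn:F1; [|discriminate].
      destruct (inp' i) eqn:F2; [|discriminate]. injection E1; injection E2; intros; subst. eauto.
    + intro i; specialize (Hn2 i); destruct (binp i), (binp' i); split; intro; try congruence; exfalso; intuition congruence.
    + intros i X X' E1 E2. destruct (binp i) eqn:F1; [|discriminate].
      destruct (binp' i) eqn:F2; [|discriminate]. injection E1; injection E2; intros; subst. eauto.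
  - intros xs x x' X X' y n n0 q q0 a H.
    apply alpha_Abs with (y := f xs y).
    + intro E; apply Hf in E; auto.
    + intro E; apply Hf in E; auto.
    + apply fresh_map_both; auto.
    + apply fresh_map_both; auto.
    + rewrite !qSwap_map in *. rewrite !qMap_comp in *.
      replace (fun s v => sw xs (f xs y) (f xs x) s (f s v)) with (fun s v => f s (sw xs y x s v))
        by (do 2 (apply functional_extensionality; intro); apply sw_map_comm; auto).
      replace (fun s v => sw xs (f xs y) (f xs x') s (f s v)) with (fun s v => f s (sw xs y x' s v))
        by (do 2 (apply functional_extensionality; intro); apply sw_map_comm; auto).
      auto.
Qed.

Lemma alpha_swap xs a b (X Y : qT) : alpha X Y -> alpha (qSwap xs a b X) (qSwap xs a b Y).
Proof. rewrite !qSwap_map. apply alpha_map, sw_inj. Qed.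

Lemma alpha_sym :
  (forall X Y : qT, alpha X Y -> alpha Y X) /\
  (forall A B : qA, alphaAbs A B -> alphaAbs B A).
Proof.
  apply alpha_comb.
  - constructor.
  - intros d inp inp' binp binp' Hn1 Hc1 H Hn2 Hc2 H0. apply alpha_Op; intros.
    + rewrite Hn1; tauto.
    + eauto.
    + rewrite Hn2; tauto.
    + eauto.
  - intros; eapply alpha_Abs; eauto.
Qed.

Lemma alpha_good :
  (forall X Y : qT, alpha X Y -> (qGood X <-> qGood Y)) /\
  (forall A B : qA, alphaAbs A B -> (qGoodAbs A <-> qGoodAbs B)).
Proof.
  apply alpha_comb; simpl.
  - tauto.
  - intros d inp inp' binp binp' i0 Hc1 H i1 Hc2 H0.
    split; intros [Hd [Hb [Hi Ha]]]; (split; [|split; [|split]]).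
    + revert Hd; apply cardLt_sub; unfold dom; intros i Hx Hy; apply Hx; apply i0; auto.
    + revert Hb; apply cardLt_sub; unfold dom; intros i Hx Hy; apply Hx; apply i1; auto.
    + intro i; specialize (Hi i); destruct (inp' i) eqn:E; auto.
      destruct (inp i) eqn:E'; [| apply i0 in E'; congruence]. apply (H i _ _ E' E); auto.
    + intro i; specialize (Ha i); destruct (binp' i) eqn:E; auto.
      destruct (binp i) eqn:E'; [| apply i1 in E'; congruence]. apply (H0 i _ _ E' E); auto.
    + revert Hd; apply cardLt_sub; unfold dom; intros i Hx Hy; apply Hx; apply i0; auto.
    + revert Hb; apply cardLt_sub; unfold dom; intros i Hx Hy; apply Hx; apply i1; auto.
    + intro i; specialize (Hi i); destruct (inp i) eqn:E; auto.
      destruct (inp' i) eqn:E'; [| apply i0 in E'; congruence]. apply (H i _ _ E E'); auto.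
    + intro i; specialize (Ha i); destruct (binp i) eqn:E; auto.
      destruct (binp' i) eqn:E'; [| apply i1 in E'; congruence]. apply (H0 i _ _ E E'); auto.
  - intros; rewrite !qSwap_map in *. rewrite !(proj1 (good_map_both _)) in *. auto.
Qed.

Lemma good_swap xs a b (X : qT) : qGood (qSwap xs a b X) <-> qGood X.
Proof. rewrite qSwap_map; apply good_map_both. Qed.

Lemma fresh_pick s (P : var -> Prop) (X1 X2 : qT) :
  cardLt P var -> qGood X1 -> qGood X2 ->
  exists u, ~ P u /\ qFresh s u X1 /\ qFresh s u X2 /\ ~ qOcc s u X1 /\ ~ qOcc s u X2.
Proof.
  intros HP G1 G2.
  destruct (cardLt_nonfull _ (avoid _ X2 s (avoid P X1 s HP G1) G2)) as [u Hu].
  exists u. repeat split; try (intro; apply Hu; tauto);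
    apply notocc_fresh_both; intro; apply Hu; tauto.
Qed.

Lemma compat zs z (B1 B2 : qT) : qGood B1 -> qGood B2 -> alpha B1 B2 ->
  alphaAbs (qAbs zs z B1) (qAbs zs z B2).
Proof.
  intros G1 G2 H.
  destruct (fresh_pick zs _ B1 B2 (avoid1 _ z small0) G1 G2) as [u [Hu [F1 [F2 _]]]].
  apply alpha_Abs with (y := u); auto; try (intro; apply Hu; auto).
  apply alpha_swap; auto.
Qed.

Lemma alpha_refl :
  (forall X : qT, qGood X -> alpha X X) /\ (forall A : qA, qGoodAbs A -> alphaAbs A A).
Proof.
  apply qboth; simpl; intros.
  - constructor.
  - destruct H1 as [_ [_ [Hi Ha]]]. apply alpha_Op; intros; try tauto.
    + rewrite H1 in H2; injection H2; intros; subst. specialize (Hi i); rewrite H1 in Hi; eauto.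
    + rewrite H1 in H2; injection H2; intros; subst. specialize (Ha i); rewrite H1 in Ha; eauto.
  - apply compat; auto.
Qed.


Lemma swap_comp_eq xs1 a1 b1 xs2 a2 b2 xs3 a3 b3 xs4 a4 b4 (X : qT) :
  (forall zs v, sw xs1 a1 b1 zs (sw xs2 a2 b2 zs v) = sw xs3 a3 b3 zs (sw xs4 a4 b4 zs v)) ->
  qSwap xs1 a1 b1 (qSwap xs2 a2 b2 X) = qSwap xs3 a3 b3 (qSwap xs4 a4 b4 X).
Proof.
  intro H. rewrite !qSwap_map, !qMap_comp. f_equal.
  do 2 (apply functional_extensionality; intro). apply H.
Qed.

Lemma swap_same xs a (X : qT) : qSwap xs a a X = X.
Proof.
  rewrite qSwap_map. rewrite <- (proj1 qMap_id_both X) at 2. f_equal.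
  do 2 (apply functional_extensionality; intro). apply sw_id.
Qed.

Lemma swap_symm xs a b (X : qT) : qSwap xs a b X = qSwap xs b a X.
Proof.
  rewrite !qSwap_map. f_equal. do 2 (apply functional_extensionality; intro). apply sw_sym.
Qed.

Lemma sw_fix s a b zs v : ~ (zs = s /\ v = a) -> ~ (zs = s /\ v = b) -> sw s a b zs v = v.
Proof. intros; swtac; tauto. Qed.

Lemma sw_img s a b w u : sw s a b s w = u -> u <> a -> u <> b -> w = u.
Proof. intros H ? ?; revert H; swtac. Qed.

Lemma notocc_swap s a b u (B : qT) : ~ qOcc s u B -> u <> a -> u <> b -> ~ qOcc s u (qSwap s a b B).
Proof.
  intros H1 H2 H3 H4. rewrite qSwap_map in H4.
  destruct (proj1 (qOcc_map_both _) B s u H4) as [w [Hw E]].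
  apply sw_img in E; auto; subst; auto.
Qed.

Lemma fs_helper s a b (B : qT) : qGood B ->
  (forall c d, qFresh s c B -> qFresh s d B -> alpha (qSwap s c d B) B) ->
  a <> b -> qFresh s b B ->
  alphaAbs (qAbs s b (qSwap s a b B)) (qAbs s a B).
Proof.
  intros G IH Hab Fb.
  destruct (fresh_pick s _ B B (avoid1 _ b (avoid1 _ a small0)) G G) as [u [Hu [F1 [_ [O1 _]]]]].
  assert (ua : u <> a) by (intro; apply Hu; tauto).
  assert (ub : u <> b) by (intro; apply Hu; tauto).
  apply alpha_Abs with (y := u); auto.
  - apply notocc_fresh_both. apply notocc_swap; auto.
  - rewrite (swap_comp_eq s u b s a b s u a s u b) by (intros; apply sw_perm1; auto).
    apply alpha_swap. apply IH; auto.
Qed.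

Lemma fresh_swap :
  (forall X : qT, qGood X -> forall s a b, qFresh s a X -> qFresh s b X -> alpha (qSwap s a b X) X) /\
  (forall A : qA, qGoodAbs A -> forall s a b, qFreshAbs s a A -> qFreshAbs s b A ->
      alphaAbs (qSwapAbs s a b A) A).
Proof.
  apply qboth; simpl.
  - intros zs x _ s a b F1 F2. rewrite sw_fix; auto. constructor.
  - intros d inp binp IH1 IH2 [_ [_ [Gi Ga]]] s a b [Fa1 Fa2] [Fb1 Fb2].
    apply alpha_Op; intro i.
    + destruct (inp i); split; congruence.
    + intros X X' E1 E2. destruct (inp i) eqn:E; [|discriminate].
      injection E1; injection E2; intros; subst.
      specialize (Gi i); specialize (Fa1 i); specialize (Fb1 i); rewrite E in *; eauto.
    + destruct (binp i); split; congruence.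
    + intros X X' E1 E2. destruct (binp i) eqn:E; [|discriminate].
      injection E1; injection E2; intros; subst.
      specialize (Ga i); specialize (Fa2 i); specialize (Fb2 i); rewrite E in *; eauto.
  - intros zs z B IH G s a b Fa Fb.
    destruct (classic (a = b)) as [<-|Hab].
    + rewrite sw_id, swap_same. apply compat; auto. apply alpha_refl; auto.
    + destruct (classic (zs = s /\ z = a)) as [[-> ->]|Ha].
      * replace (sw s a b s a) with b by swtac.
        destruct Fb as [[_ ?]|Fb]; [congruence|].
        apply fs_helper; auto; intros; apply IH; auto.
      * destruct (classic (zs = s /\ z = b)) as [[-> ->]|Hb].
        -- replace (sw s a b s b) with a by swtac.
           destruct Fa as [[_ ?]|Fa]; [congruence|].
           rewrite swap_symm. apply fs_helper; auto; intros; apply IH; auto.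
        -- rewrite sw_fix; auto.
           destruct Fa as [?|Fa]; [tauto|]. destruct Fb as [?|Fb]; [tauto|].
           apply compat; auto. apply good_swap; auto.
Qed.


Lemma good_swap_alpha s y x y' x' (X X' : qT) :
  qGood X -> alpha (qSwap s y x X) (qSwap s y' x' X') -> qGood X'.
Proof.
  intros G H. apply (good_swap s y' x'). apply (proj1 alpha_good _ _ H). apply good_swap; auto.
Qed.

Lemma alpha_trans_gen :
  (forall Q : qT, forall f, inj f -> qGood Q -> forall Y Z,
      alpha (qMap f Q) Y -> alpha Y Z -> alpha (qMap f Q) Z) /\
  (forall A : qA, forall f, inj f -> qGoodAbs A -> forall B C,
      alphaAbs (qMapAbs f A) B -> alphaAbs B C -> alphaAbs (qMapAbs f A) C).
Proof.
  apply qboth; simpl.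
  - intros s x f Hf _ Y Z H1 H2. inversion H1; subst. inversion H2; subst. constructor.
  - intros d inp binp IH1 IH2 f Hf [_ [_ [Gi Ga]]] Y Z H1 H2.
    inversion H1 as [|d0 i1 inp' b1 binp' Hn1 Hc1 Hn2 Hc2]; subst.
    inversion H2 as [|d1 i2 inp'' b2 binp'' Hn3 Hc3 Hn4 Hc4]; subst.
    apply alpha_Op.
    + intro i. rewrite Hn1, Hn3. tauto.
    + intros i X X'' E1 E2. destruct (inp i) as [Q|] eqn:E; [|discriminate].
      injection E1; intros; subst.
      destruct (inp' i) as [X'|] eqn:E'.
      * specialize (Gi i); rewrite E in Gi.
        apply (IH1 i Q E f Hf Gi X' X'').
        -- apply (Hc1 i); auto. rewrite E; auto.
        -- apply (Hc3 i); auto.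
      * exfalso. apply Hn1 in E'. rewrite E in E'. discriminate.
    + intro i. rewrite Hn2, Hn4. tauto.
    + intros i X X'' E1 E2. destruct (binp i) as [Q|] eqn:E; [|discriminate].
      injection E1; intros; subst.
      destruct (binp' i) as [X'|] eqn:E'.
      * specialize (Ga i); rewrite E in Ga.
        apply (IH2 i Q E f Hf Ga X' X'').
        -- apply (Hc2 i); auto. rewrite E; auto.
        -- apply (Hc4 i); auto.
      * exfalso. apply Hn2 in E'. rewrite E in E'. discriminate.
  - intros s x Q IH f Hf GQ B C H1 H2.
    inversion H1 as [xs0 x0 x' X0 X' y Hy1 Hy2 Hf1 Hf2 Ha]; subst.
    inversion H2 as [xs1 x1 x'' X1 X'' y' Hy1' Hy2' Hf1' Hf2' Ha']; subst.
    set (x1 := f s x) in *. set (X1 := qMap f Q) in *.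
    assert (G1 : qGood X1) by (apply good_map_both; auto).
    assert (G' : qGood X') by (eapply good_swap_alpha; eauto).
    assert (G'' : qGood X'') by (eapply good_swap_alpha; eauto).
    assert (Hc : cardLt (fun v => (((((False \/ v = x1) \/ v = x') \/ v = x'') \/ qOcc s v X1) \/ qOcc s v X')) var)
      by (apply avoid; [apply avoid; [repeat apply avoid1; apply small0 | auto] | auto]).
    destruct (fresh_pick s _ X'' X'' Hc G'' G'') as [w [Hw [Fw'' [_ [Ow'' _]]]]].
    assert (wx1 : w <> x1) by (intro; apply Hw; tauto).
    assert (wx' : w <> x') by (intro; apply Hw; tauto).
    assert (wx'' : w <> x'') by (intro; apply Hw; tauto).
    assert (Ow1 : ~ qOcc s w X1) by (intro; apply Hw; tauto).
    assert (Ow' : ~ qOcc s w X') by (intro; apply Hw; tauto).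
    assert (Fw1 : qFresh s w X1) by (apply notocc_fresh_both; auto).
    assert (Fw' : qFresh s w X') by (apply notocc_fresh_both; auto).
    assert (TR : forall Y Z, alpha (qSwap s w x1 X1) Y -> alpha Y Z -> alpha (qSwap s w x1 X1) Z).
    { assert (EP : qSwap s w x1 X1 = qMap (fun s0 v => sw s w x1 s0 (f s0 v)) Q)
        by (unfold X1; rewrite qSwap_map, qMap_comp; reflexivity).
      rewrite EP. apply IH; auto. apply sw_inj_comp; auto. }
    apply alpha_Abs with (y := w); auto.
    assert (S1 : alpha (qSwap s w x1 X1) (qSwap s w x1 (qSwap s w y X1))).
    { apply (proj1 alpha_sym). apply alpha_swap. apply fresh_swap; auto. }
    assert (S2 : alpha (qSwap s w x1 (qSwap s w y X1)) (qSwap s w x' (qSwap s w y X'))).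
    { rewrite (swap_comp_eq s w x1 s w y s w y s y x1) by (intros; symmetry; apply sw_perm2; auto).
      rewrite (swap_comp_eq s w x' s w y s w y s y x') by (intros; symmetry; apply sw_perm2; auto).
      apply alpha_swap; auto. }
    assert (S3 : alpha (qSwap s w x' (qSwap s w y X')) (qSwap s w x' X')).
    { apply alpha_swap. apply fresh_swap; auto. }
    assert (T1 : alpha (qSwap s w x1 X1) (qSwap s w x' X')) by eauto.
    assert (S1' : alpha (qSwap s w x' X') (qSwap s w x' (qSwap s w y' X'))).
    { apply (proj1 alpha_sym). apply alpha_swap. apply fresh_swap; auto. }
    assert (S2' : alpha (qSwap s w x' (qSwap s w y' X')) (qSwap s w x'' (qSwap s w y' X''))).
    { rewrite (swap_comp_eq s w x' s w y' s w y' s y' x') by (intros; symmetry; apply sw_perm2; auto).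
      rewrite (swap_comp_eq s w x'' s w y' s w y' s y' x'') by (intros; symmetry; apply sw_perm2; auto).
      apply alpha_swap; auto. }
    assert (S3' : alpha (qSwap s w x'' (qSwap s w y' X'')) (qSwap s w x'' X'')).
    { apply alpha_swap. apply fresh_swap; auto. }
    eauto.
Qed.


Lemma inj_id : inj (fun _ v => v).
Proof. intros s a b E; exact E. Qed.

Lemma alpha_trans (X Y Z : qT) : qGood X -> alpha X Y -> alpha Y Z -> alpha X Z.
Proof.
  intros G. rewrite <- (proj1 qMap_id_both X). apply alpha_trans_gen; auto using inj_id.
Qed.

Lemma alphaAbs_trans (X Y Z : qA) : qGoodAbs X -> alphaAbs X Y -> alphaAbs Y Z -> alphaAbs X Z.
Proof.
  intros G. rewrite <- (proj2 qMap_id_both X). apply alpha_trans_gen; auto using inj_id.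
Qed.

Lemma alphaE_good (a b : qT) : alphaE a b -> (qGood a <-> qGood b).
Proof.
  induction 1.
  - apply alpha_good; auto.
  - tauto.
  - tauto.
  - tauto.
Qed.

Lemma alphaAbsE_good (a b : qA) : alphaAbsE a b -> (qGoodAbs a <-> qGoodAbs b).
Proof.
  induction 1.
  - apply alpha_good; auto.
  - tauto.
  - tauto.
  - tauto.
Qed.

Lemma alphaE_alpha (a b : qT) : alphaE a b -> qGood a -> alpha a b.
Proof.
  induction 1; intro G.
  - auto.
  - apply alpha_refl; auto.
  - apply alpha_sym. apply IHclos_refl_sym_trans. apply (alphaE_good _ _ H); auto.
  - apply alpha_trans with y; auto. apply IHclos_refl_sym_trans2. apply (alphaE_good _ _ H); auto.
Qed.

Lemma alphaAbsE_alpha (a b : qA) : alphaAbsE a b -> qGoodAbs a -> alphaAbs a b.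
Proof.
  induction 1; intro G.
  - auto.
  - apply alpha_refl; auto.
  - apply alpha_sym. apply IHclos_refl_sym_trans. apply (alphaAbsE_good _ _ H); auto.
  - apply alphaAbs_trans with y; auto. apply IHclos_refl_sym_trans2. apply (alphaAbsE_good _ _ H); auto.
Qed.

Lemma exist_eq {T : Type} (P : T -> Prop) (a b : T) (pa : P a) (pb : P b) :
  a = b -> exist P a pa = exist P b pb.
Proof. intros ->. f_equal. apply proof_irrelevance. Qed.

Lemma clsT_eq (a b : qT) : alphaE a b -> clsT a = clsT b.
Proof.
  intro H. unfold clsT. apply exist_eq.
  apply functional_extensionality; intro c. apply propositional_extensionality.
  split; intro H'.
  - eapply rst_trans; [apply rst_sym; exact H | exact H'].
  - eapply rst_trans; [exact H | exact H'].
Qed.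

Lemma clsA_eq (a b : qA) : alphaAbsE a b -> clsA a = clsA b.
Proof.
  intro H. unfold clsA. apply exist_eq.
  apply functional_extensionality; intro c. apply propositional_extensionality.
  split; intro H'.
  - eapply rst_trans; [apply rst_sym; exact H | exact H'].
  - eapply rst_trans; [exact H | exact H'].
Qed.

Lemma repT_cls (Z : qT) : alphaE (repT (clsT Z)) Z.
Proof.
  unfold repT, clsT; simpl.
  destruct (constructive_indefinite_description _ _) as [X e]; simpl.
  apply rst_sym. change (alphaE Z X). rewrite e. apply rst_refl.
Qed.

Lemma repA_cls (Z : qA) : alphaAbsE (repA (clsA Z)) Z.
Proof.
  unfold repA, clsA; simpl.
  destruct (constructive_indefinite_description _ _) as [X e]; simpl.
  apply rst_sym. change (alphaAbsE Z X). rewrite e. apply rst_refl.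
Qed.

Lemma cls_repT (T : term var varsort index bindex opsym) : clsT (repT T) = T.
Proof.
  destruct T as [C HC]. unfold repT, clsT; simpl.
  destruct (constructive_indefinite_description _ _) as [X e]; simpl.
  apply exist_eq. auto.
Qed.

Lemma cls_repA (T : abs var varsort index bindex opsym) : clsA (repA T) = T.
Proof.
  destruct T as [C HC]. unfold repA, clsA; simpl.
  destruct (constructive_indefinite_description _ _) as [X e]; simpl.
  apply exist_eq. auto.
Qed.

Lemma good_cls (Z : qT) : qGood Z -> good (clsT Z).
Proof. intro G. unfold good. apply (alphaE_good _ _ (repT_cls Z)); auto. Qed.

Lemma rename s y x1 (Y1 : qT) : qGood Y1 -> y <> x1 -> ~ qOcc s y Y1 ->
  alphaAbs (qAbs s y (qSwap s y x1 Y1)) (qAbs s x1 Y1).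
Proof.
  intros G yx O.
  destruct (fresh_pick s _ Y1 Y1 (avoid1 _ x1 (avoid1 _ y small0)) G G) as [z [Hz [Fz [_ [Oz _]]]]].
  assert (zy : z <> y) by (intro; apply Hz; tauto).
  assert (zx : z <> x1) by (intro; apply Hz; tauto).
  apply alpha_Abs with (y := z); auto.
  - apply notocc_fresh_both. apply notocc_swap; auto.
  - rewrite !qSwap_map, !qMap_comp.
    rewrite (proj1 qMap_ext_both Y1 _ (sw s z x1)).
    + apply alpha_refl. apply good_map_both; auto.
    + intros zs v Ov. apply sw_perm3; auto.
      * intros [-> ->]; auto.
      * intros [-> ->]; auto.
Qed.


Lemma main_gen (param : Type) (varsOf : param -> varsort -> var -> Prop)
  (phi : term var varsort index bindex opsym -> param -> bool)
  (phiAbs : abs var varsort index bindex opsym -> param -> bool)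
  (H1 : forall xs p, cardLt (varsOf p xs) var)
  (H2 : forall xs x p, phi (Var xs x) p = true)
  (H3 : forall d (inp : input index (term var varsort index bindex opsym))
          (binp : input bindex (abs var varsort index bindex opsym)) p,
      cardLt (dom inp) var -> cardLt (dom binp) var ->
      (forall i X, inp i = Some X -> good X /\ (forall q, phi X q = true)) ->
      (forall i A, binp i = Some A -> goodAbs A /\ (forall q, phiAbs A q = true)) ->
      phi (Op d inp binp) p = true)
  (H4 : forall xs x X p,
      good X -> phi X p = true -> ~ varsOf p xs x ->
      phiAbs (Abs xs x X) p = true) :
  (forall Y : qT, forall f, inj f -> qGood Y -> forall p, phi (clsT (qMap f Y)) p = true) /\
  (forall A : qA, forall f, inj f -> qGoodAbs A -> forall p, phiAbs (clsA (qMapAbs f A)) p = true).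
Proof.
  apply qboth; simpl.
  - intros s x f _ _ p. apply H2.
  - intros d inp binp IH1 IH2 f Hf [Gd [Gb [Gi Ga]]] p.
    set (inpT := fun i => match inp i with Some Y => Some (clsT (qMap f Y)) | None => None end).
    set (binpT := fun i => match binp i with Some A => Some (clsA (qMapAbs f A)) | None => None end).
    assert (E : clsT (qOp d (fun i => match inp i with Some Y => Some (qMap f Y) | None => None end)
                            (fun i => match binp i with Some A => Some (qMapAbs f A) | None => None end))
                = Op d inpT binpT).
    { unfold Op. apply clsT_eq. apply rst_step. apply alpha_Op; intro i; unfold inpT, binpT.
      - destruct (inp i); split; congruence.
      - intros X X' E1 E2. destruct (inp i) as [Y|] eqn:E; [|discriminate].
        injection E1; injection E2; intros; subst.
        specialize (Gi i); rewrite E in Gi.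
        apply alphaE_alpha. apply rst_sym, repT_cls. apply good_map_both; auto.
      - destruct (binp i); split; congruence.
      - intros X X' E1 E2. destruct (binp i) as [Y|] eqn:E; [|discriminate].
        injection E1; injection E2; intros; subst.
        specialize (Ga i); rewrite E in Ga.
        apply alphaAbsE_alpha. apply rst_sym, repA_cls. apply good_map_both; auto. }
    rewrite E. apply H3.
    + revert Gd. apply cardLt_sub. unfold dom, inpT. intro i. destruct (inp i); congruence.
    + revert Gb. apply cardLt_sub. unfold dom, binpT. intro i. destruct (binp i); congruence.
    + unfold inpT. intros i X EX. destruct (inp i) as [Y|] eqn:E'; [|discriminate].
      injection EX; intros; subst. specialize (Gi i); rewrite E' in Gi. split.
      * apply good_cls. apply good_map_both; auto.
      * intro q. apply (IH1 i Y E' f Hf Gi).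
    + unfold binpT. intros i X EX. destruct (binp i) as [Y|] eqn:E'; [|discriminate].
      injection EX; intros; subst. specialize (Ga i); rewrite E' in Ga. split.
      * unfold goodAbs. apply (alphaAbsE_good _ _ (repA_cls _)). apply good_map_both; auto.
      * intro q. apply (IH2 i Y E' f Hf Ga).
  - intros s x Y IH f Hf GY p.
    set (x1 := f s x). set (Y1 := qMap f Y).
    assert (G1 : qGood Y1) by (apply good_map_both; auto).
    destruct (fresh_pick s _ Y1 Y1 (avoid1 _ x1 (H1 s p)) G1 G1) as [y [Hy [_ [_ [Oy _]]]]].
    set (Y2 := qSwap s y x1 Y1).
    assert (EY2 : Y2 = qMap (fun s0 v => sw s y x1 s0 (f s0 v)) Y)
      by (unfold Y2, Y1; rewrite qSwap_map, qMap_comp; reflexivity).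
    assert (G2 : qGood Y2) by (apply good_swap; auto).
    assert (P2 : forall q, phi (clsT Y2) q = true)
      by (intro q; rewrite EY2; apply IH; auto; apply sw_inj_comp; auto).
    assert (HA : phiAbs (Abs s y (clsT Y2)) p = true).
    { apply H4; [apply good_cls; auto | auto | intro; apply Hy; auto]. }
    replace (clsA (qAbs s x1 Y1)) with (Abs s y (clsT Y2)); auto.
    unfold Abs. apply clsA_eq. apply rst_trans with (qAbs s y Y2).
    + apply rst_step. apply compat; auto.
      * apply (alphaE_good _ _ (repT_cls Y2)); auto.
      * apply alphaE_alpha. apply repT_cls. apply (alphaE_good _ _ (repT_cls Y2)); auto.
    + apply rst_step. apply rename; auto; intro; apply Hy; auto.
Qed.

End Dev.

Theorem theorem1 (var varsort index bindex opsym : Type)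
  (Hinf : infiniteT var) (Hreg : regularT var)
  (param : Type) (varsOf : param -> varsort -> var -> Prop)
  (phi : term var varsort index bindex opsym -> param -> bool)
  (phiAbs : abs var varsort index bindex opsym -> param -> bool)
  (H1 : forall xs p, cardLt (varsOf p xs) var)
  (H2 : forall xs x p, phi (Var xs x) p = true)
  (H3 : forall d (inp : input index (term var varsort index bindex opsym))
          (binp : input bindex (abs var varsort index bindex opsym)) p,
      cardLt (dom inp) var -> cardLt (dom binp) var ->
      (forall i X, inp i = Some X -> good X /\ (forall q, phi X q = true)) ->
      (forall i A, binp i = Some A -> goodAbs A /\ (forall q, phiAbs A q = true)) ->
      phi (Op d inp binp) p = true)
  (H4 : forall xs x X p,
      good X -> phi X p = true -> ~ varsOf p xs x ->
      phiAbs (Abs xs x X) p = true) :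
  (forall X p, good X -> phi X p = true) /\
  (forall A p, goodAbs A -> phiAbs A p = true).
Proof.
  destruct (main_gen var varsort index bindex opsym Hinf Hreg param varsOf phi phiAbs H1 H2 H3 H4)
    as [M1 M2].
  split.
  - intros X p G. rewrite <- (cls_repT _ _ _ _ _ X).
    rewrite <- (proj1 (qMap_id_both var varsort index bindex opsym) (repT X)).
    apply M1; auto. apply inj_id.
  - intros A p G. rewrite <- (cls_repA _ _ _ _ _ A).
    rewrite <- (proj2 (qMap_id_both var varsort index bindex opsym) (repA A)).
    apply M2; auto. apply inj_id.
Qed.
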